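(* Under the standing assumptions (A1)–(A4), let $\alpha>0$, $0<\gamma<\frac1{m-1}$, and consider the system (Algorithm B) $$\begin{aligned} \dot x&=\mathrm{Prox}_{F^m}\Big[x-\nabla F^0(x)+v+\gamma\textstyle\sum_{j=1}^{m-1}z^j\Big]-x,\\ \dot z^j&=\mathrm{Prox}_{F^j}[x-\gamma z^j]-x,\quad j=1,\dots,m-1,\\ \dot v&=-Y^{-1}(x-d)-\alpha L_{nq}v-w,\\ \dot w&=\alpha L_{nq}v,\\ \dot y&=-L_{nn}y, \end{aligned}$$ with state $(x,z,v,w,y)\in\mathbb{R}^{nq}\times\mathbb{R}^{(m-1)nq}\times\mathbb{R}^{nq}\times\mathbb{R}^{nq}\times\mathbb{R}^{n^2}$. If $(x^*,z^*,v^*,w^*,y^* )$ is an equilibrium of this system with $(\mathbf{1}_n\otimes I_q)^TH_{nq}w^*=\mathbf{0}_q$ and $y^*=\mathbf{1}_n\otimes h$, then $x^*$ is a solution of the problem $\min_x\sum_if_i(x_i)$ s.t. $\sum_ix_i=\sum_id_i$.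
   Context: Standing setup: $n$ agents; agent $i$ has state $x_i\in\mathbb{R}^q$, $x=(x_1^T,\dots,x_n^T)^T$. Given $d_i\in\mathbb{R}^q$, $d=(d_1^T,\dots,d_n^T)^T$. Integer $m\ge2$. $f_i=\sum_{j=0}^mf_i^j$; $F^j(x)=\sum_if_i^j(x_i)$; $\nabla F^0(x)=(\nabla f_1^0(x_1)^T,\dots,\nabla f_n^0(x_n)^T)^T$. Assumptions: (A1) each $f_i^0$ is twice continuously differentiable and strongly convex with a common constant $c>m-1$; (A2) each $f_i^j$, $j=1,\dots,m$, is proper closed convex; (A3) weighted directed strongly connected graph; (A4) feasibility. $\mathrm{prox}_f[\theta]=\arg\min_\delta\{f(\delta)+\frac12\|\delta-\theta\|^2\}$, $\mathrm{Prox}_{F^j}[\xi]=(\mathrm{prox}_{f_1^j}[\xi_1]^T,\dots,\mathrm{prox}_{f_n^j}[\xi_n]^T)^T$. Graph: adjacency $\mathcal{A}=[a_{ij}]$, Laplacian $L_n=D^{in}-\mathcal{A}$, $D^{in}=\mathrm{diag}(\sum_ja_{ij})$; $h$ positive left eigenvector with $h^TL_n=0$, $\sum_ih_i=1$; $H_{nq}=\mathrm{diag}(h_1,\dots,h_n)\otimes I_q$, $L_{nq}=L_n\otimes I_q$, $L_{nn}=L_n\otimes I_n$. The vector $y=(y_1^T,\dots,y_n^T)^T$ with $y_i=(y_i^1,\dots,y_i^n)^T\in\mathbb{R}^n$, and $Y=\mathrm{diag}(y_1^1,y_2^2,\dots,y_n^n)\otimes I_q$ (assumed invertible where used). *)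

(* Defs.v *)
From mathcomp Require Import ssreflect ssrfun ssrbool eqtype ssrnat seq fintype bigop.
From Stdlib Require Import Reals Relations.
Set Implicit Arguments. Unset Strict Implicit.

Local Open Scope R_scope.

Definition rsum (n : nat) (F : 'I_n -> R) : R := \big[Rplus/0%R]_(i < n) F i.

Definition rsum_nat (lo hi : nat) (F : nat -> R) : R :=
  \big[Rplus/0%R]_(lo <= j < hi) F j.

Definition vec (q : nat) := 'I_q -> R.

Definition dot (q : nat) (u v : vec q) : R := rsum (fun k => u k * v k).
Definition norm (q : nat) (u : vec q) : R := sqrt (dot u u).
Definition vsub (q : nat) (u v : vec q) : vec q := fun k => u k - v k.
Definition vcomb (q : nat) (t : R) (u v : vec q) : vec q :=
  fun k => t * u k + (1 - t) * v k.

(* Extended-valued functions R^q -> R ∪ {+oo} are represented by a pair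
   (f, dom): f x is the value on dom, and the value is +oo off dom. *)
Definition proper_fun (q : nat) (dom : vec q -> Prop) : Prop := exists x, dom x.

Definition convex_fun (q : nat) (f : vec q -> R) (dom : vec q -> Prop) : Prop :=
  forall x y t, dom x -> dom y -> 0 <= t <= 1 ->
    dom (vcomb t x y) /\ f (vcomb t x y) <= t * f x + (1 - t) * f y.

Definition closed_fun (q : nat) (f : vec q -> R) (dom : vec q -> Prop) : Prop :=
  forall x r, (dom x -> r < f x) ->
    exists del, 0 < del /\
      forall y, norm (vsub y x) < del -> dom y -> r < f y.

Definition strongly_convex (q : nat) (c : R) (f : vec q -> R) : Prop :=
  forall x y t, 0 <= t <= 1 ->
    f (vcomb t x y) <= t * f x + (1 - t) * f y
                       - c / 2 * t * (1 - t) * (norm (vsub x y)) ^ 2.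

Definition is_gradient (q : nat) (f : vec q -> R) (g : vec q -> vec q) : Prop :=
  forall x eps, 0 < eps -> exists del, 0 < del /\
    forall y, norm (vsub y x) < del ->
      Rabs (f y - f x - dot (g x) (vsub y x)) <= eps * norm (vsub y x).

Definition continuous_vec (q : nat) (f : vec q -> R) : Prop :=
  forall x eps, 0 < eps -> exists del, 0 < del /\
    forall y, norm (vsub y x) < del -> Rabs (f y - f x) < eps.

Definition C2_with_gradient (q : nat) (f : vec q -> R) (g : vec q -> vec q) : Prop :=
  is_gradient f g /\
  exists Hs : vec q -> 'I_q -> vec q,
    (forall k, is_gradient (fun x => g x k) (fun x => Hs x k)) /\
    (forall k l, continuous_vec (fun x => Hs x k l)).

Definition is_prox (q : nat) (f : vec q -> R) (dom : vec q -> Prop)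
  (theta p : vec q) : Prop :=
  dom p /\ forall del, dom del ->
    f p + / 2 * (norm (vsub p theta)) ^ 2 <= f del + / 2 * (norm (vsub del theta)) ^ 2.

Definition laplacian (n : nat) (a : 'I_n -> 'I_n -> R) (i j : 'I_n) : R :=
  (if i == j then rsum (fun l => a i l) else 0) - a i j.

(* strongly connected: a_ij > 0 means an edge from j to i *)
Definition strongly_connected (n : nat) (a : 'I_n -> 'I_n -> R) : Prop :=
  forall i j : 'I_n, clos_refl_trans 'I_n (fun u v => 0 < a v u) i j.

(* Main.v *)
From HB Require Import structures.
Require Import Defs.
From mathcomp Require Import ssreflect ssrfun ssrbool eqtype ssrnat seq fintype bigop.
From Stdlib Require Import Reals Relations Lra.
Local Open Scope R_scope.

HB.instance Definition _ := Monoid.isComLaw.Build R 0 Rplus (fun a b c => esym (Rplus_assoc a b c)) Rplus_comm Rplus_0_l.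
HB.instance Definition _ := Monoid.isMulLaw.Build R 0 Rmult Rmult_0_l Rmult_0_r.
HB.instance Definition _ := Monoid.isAddLaw.Build R Rmult Rplus Rmult_plus_distr_r Rmult_plus_distr_l.

Lemma rsumD n (F G : 'I_n -> R) : rsum (fun i => F i + G i) = rsum F + rsum G.
Proof. by rewrite /rsum big_split. Qed.
Lemma rsumZ n c (F : 'I_n -> R) : rsum (fun i => c * F i) = c * rsum F.
Proof. by rewrite /rsum big_distrr. Qed.
Lemma rsum_ext n (F G : 'I_n -> R) : (forall i, F i = G i) -> rsum F = rsum G.
Proof. by move=> H; rewrite /rsum; apply: eq_bigr => i _. Qed.
Lemma rsum_le n (F G : 'I_n -> R) : (forall i, F i <= G i) -> rsum F <= rsum G.
Proof. move=> H; rewrite /rsum; apply: (big_ind2 (fun x y => x <= y)) => //; [lra|]. move=> *; lra. Qed.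
Lemma rsum_nat_le lo hi (F G : nat -> R) : (forall j, (lo <= j < hi)%nat -> F j <= G j) -> rsum_nat lo hi F <= rsum_nat lo hi G.
Proof. move=> H; rewrite /rsum_nat big_seq [X in _ <= X]big_seq.
apply: (big_ind2 (fun x y => x <= y)) => //; [lra| move=> *; lra |].
move=> j; rewrite mem_index_iota; exact: H. Qed.
Lemma rsum_nat_ext lo hi (F G : nat -> R) : (forall j, (lo <= j < hi)%nat -> F j = G j) -> rsum_nat lo hi F = rsum_nat lo hi G.
Proof. move=> H; rewrite /rsum_nat big_seq [RHS]big_seq.
apply: eq_bigr => j; rewrite mem_index_iota; exact: H. Qed.
Lemma rsum_natD lo hi (F G : nat -> R) : rsum_nat lo hi (fun i => F i + G i) = rsum_nat lo hi F + rsum_nat lo hi G.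
Proof. by rewrite /rsum_nat big_split. Qed.
Lemma rsum_natZ lo hi c (F : nat -> R) : rsum_nat lo hi (fun i => c * F i) = c * rsum_nat lo hi F.
Proof. by rewrite /rsum_nat big_distrr. Qed.
Lemma rsum_exch n lo hi (F : 'I_n -> nat -> R) :
  rsum (fun i => rsum_nat lo hi (F i)) = rsum_nat lo hi (fun j => rsum (fun i => F i j)).
Proof. rewrite /rsum /rsum_nat. exact: exchange_big. Qed.
Lemma rsum_exch2 n p (F : 'I_n -> 'I_p -> R) :
  rsum (fun i => rsum (F i)) = rsum (fun j => rsum (fun i => F i j)).
Proof. rewrite /rsum. exact: exchange_big. Qed.
Lemma rsum_nat_last lo m F : (lo <= m)%nat -> rsum_nat lo m.+1 F = rsum_nat lo m F + F m.
Proof. move=> H; by rewrite /rsum_nat big_nat_recr. Qed.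
Lemma rsum_ge0 n (F : 'I_n -> R) : (forall i, 0 <= F i) -> 0 <= rsum F.
Proof. move=> H; rewrite /rsum; apply: (big_ind (fun x => 0 <= x)) => //; [lra| move=> *; lra]. Qed.
Lemma rsum_term_le n (F : 'I_n -> R) i : (forall i, 0 <= F i) -> F i <= rsum F.
Proof. move=> H; rewrite /rsum (bigD1 i) //=.
rewrite -[X in X <= _]Rplus_0_r; apply: Rplus_le_compat_l.
apply: (big_ind (fun x => 0 <= x)) => //; [lra| move=> *; lra]. Qed.
Lemma rsum_delta n i (A : R) (v : 'I_n -> R) : rsum (fun l => (if i == l then A else 0) * v l) = A * v i.
Proof. rewrite /rsum (bigD1 i) //= eqxx big1 ?Rplus_0_r //.
move=> j; rewrite eq_sym => /negbTE ->; lra. Qed.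
Lemma small_le a K : 0 <= K -> (forall t, 0 < t <= 1 -> a <= t*K) -> a <= 0.
Proof.
move=> HK H. destruct (Rle_dec a 0) as [|Ha]; auto. apply Rnot_le_lt in Ha.
set b := a / (K + 1).
have Hb : b * (K + 1) = a by rewrite /b; field; lra.
have Hb0 : 0 < b by rewrite /b; apply: Rdiv_lt_0_compat; lra.
set t := Rmin 1 b.
have Ht0 : 0 < t by apply: Rmin_pos; lra.
have Ht1 : t <= 1 by apply: Rmin_l.
have Htb : t <= b by apply: Rmin_r.
have := H t (conj Ht0 Ht1).
have : t * K <= b * K by apply: Rmult_le_compat_r; lra.
nra.
Qed.

Lemma dot_self_ge0 q (u : vec q) : 0 <= dot u u.
Proof. apply: rsum_ge0 => k; nra. Qed.

Lemma norm_sq q (u : vec q) : norm u ^ 2 = dot u u.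
Proof. rewrite /norm pow2_sqrt //; exact: dot_self_ge0. Qed.

Lemma prox_subgrad q (f : vec q -> R) dom theta p del :
  convex_fun f dom -> is_prox f dom theta p -> dom del ->
  f p + rsum (fun k => (theta k - p k) * (del k - p k)) <= f del.
Proof.
move=> Hc [Hp Hpr] Hd.
set E := rsum (fun k => (del k - p k) * (del k - p k)).
set W := rsum (fun k => (p k - theta k) * (del k - p k)).
set D := rsum (fun k => (p k - theta k) * (p k - theta k)).
have HE : 0 <= E by apply: rsum_ge0 => k; exact: Rle_0_sqr.
have -> : rsum (fun k => (theta k - p k) * (del k - p k)) = -1 * W.
  rewrite /W -rsumZ; apply: rsum_ext => k; ring.
suff : f p - W - f del <= 0 by lra.
apply: (small_le _ (E / 2)); first lra.
move=> t Ht.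
have [Hdt Hft] := Hc del p t Hd Hp (conj (Rlt_le _ _ (proj1 Ht)) (proj2 Ht)).
have := Hpr _ Hdt.
rewrite !norm_sq.
have -> : dot (vsub (vcomb t del p) theta) (vsub (vcomb t del p) theta) = t^2 * E + 2 * t * W + D.
  rewrite /dot /E /W /D -!rsumZ -!rsumD; apply: rsum_ext => k.
  rewrite /vsub /vcomb; ring.
have -> : dot (vsub p theta) (vsub p theta) = D by [].
move=> Hpr2.
have : t * (f p - W - f del) <= t * (t * (E / 2)) by nra.
move=> H2; apply: (Rmult_le_reg_l t); lra.
Qed.

Lemma grad_ineq q (f : vec q -> R) g p del :
  is_gradient f g ->
  (forall x y t, 0 <= t <= 1 -> f (vcomb t x y) <= t * f x + (1 - t) * f y) ->
  f p + rsum (fun k => g p k * (del k - p k)) <= f del.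
Proof.
move=> Hg Hc.
set N := norm (vsub del p).
set G := rsum (fun k => g p k * (del k - p k)).
have HN : 0 <= N by apply: sqrt_pos.
suff : G - (f del - f p) <= 0 by lra.
apply: (small_le _ N) => // eps [He _].
have [dl [Hdl Hy]] := Hg p eps He.
set b := dl / (2 * (N + 1)).
have Hb0 : 0 < b by rewrite /b; apply: Rdiv_lt_0_compat; lra.
have Hb : b * (2 * (N + 1)) = dl by rewrite /b; field; lra.
set t := Rmin 1 b.
have Ht0 : 0 < t by apply: Rmin_pos; lra.
have Ht1 : t <= 1 by apply: Rmin_l.
have Htb : t <= b by apply: Rmin_r.
have Hnorm : norm (vsub (vcomb t del p) p) = t * N.
  rewrite /N /norm.
  have -> : dot (vsub (vcomb t del p) p) (vsub (vcomb t del p) p) = t^2 * dot (vsub del p) (vsub del p).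
    rewrite /dot -rsumZ; apply: rsum_ext => k; rewrite /vsub /vcomb; ring.
  rewrite sqrt_mult; [|nra|apply: dot_self_ge0].
  rewrite sqrt_pow2 //; lra.
have HtN : t * N < dl.
  have : t * N <= b * N by apply: Rmult_le_compat_r.
  nra.
have := Hy (vcomb t del p).
rewrite Hnorm => /(_ HtN).
have -> : dot (g p) (vsub (vcomb t del p) p) = t * G.
  rewrite /dot /G -rsumZ; apply: rsum_ext => k; rewrite /vsub /vcomb; ring.
move=> Habs.
have H1 := Rle_trans _ _ _ (Rle_abs _) (eq_ind _ (fun z => z <= _) Habs _ (esym (Rabs_Ropp _))).
have := Hc del p t (conj (Rlt_le _ _ Ht0) Ht1).
move=> H2.
have : t * (G - (f del - f p)) <= t * (eps * N) by nra.
move=> H3; apply: (Rmult_le_reg_l t); lra.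
Qed.

Lemma exists_max n (u : 'I_n -> R) (i : 'I_n) : exists i0, forall l, u l <= u i0.
Proof.
suff H : forall s : seq 'I_n, exists i0, forall l, l \in s -> u l <= u i0.
  have [i0 Hi0] := H (enum 'I_n). exists i0 => l; apply: Hi0; by rewrite mem_enum.
elim => [|x s [j Hj]]; first by exists i.
destruct (Rle_dec (u x) (u j)) as [Hle|Hlt].
- exists j => l; rewrite in_cons => /orP [/eqP ->|/Hj] //.
- exists x => l; rewrite in_cons => /orP [/eqP ->|/Hj]; lra.
Qed.

Lemma lap_expand n (a : 'I_n -> 'I_n -> R) (u : 'I_n -> R) i :
  rsum (fun l => laplacian a i l * u l) = rsum (fun l => a i l * (u i - u l)).
Proof.
have -> : rsum (fun l => laplacian a i l * u l) =
  rsum (fun l => (if i == l then rsum (fun l => a i l) else 0) * u l + (-1) * (a i l * u l)).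
  apply: rsum_ext => l; rewrite /laplacian; ring.
have -> : rsum (fun l => a i l * (u i - u l)) =
  rsum (fun l => u i * a i l + (-1) * (a i l * u l)).
  apply: rsum_ext => l; ring.
rewrite !rsumD !rsumZ rsum_delta; rewrite (Rmult_comm (u i)); reflexivity.
Qed.

Lemma consensus n (a : 'I_n -> 'I_n -> R) (u : 'I_n -> R) :
  (forall i k, 0 <= a i k) -> strongly_connected a ->
  (forall i, rsum (fun l => laplacian a i l * u l) = 0) -> forall i l, u i = u l.
Proof.
move=> Ha Hsc Hl i.
have [i0 Hmax] := exists_max _ u i.
have Hcl : forall x y, 0 < a y x -> u y = u i0 -> u x = u i0.
  move=> x y Hyx Hy.
  have := rsum_term_le _ (fun l => a y l * (u y - u l)) x.
  rewrite -lap_expand Hl.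
  have Hnn : forall l, 0 <= a y l * (u y - u l).
    move=> l; apply: Rmult_le_pos => //; have := Hmax l; lra.
  move=> /(_ Hnn) H.
  have := Hmax x.
  have : u y - u x <= 0.
    destruct (Rle_dec (u y - u x) 0) as [|Hc] => //.
    apply Rnot_le_lt in Hc. have : 0 < a y x * (u y - u x) by apply: Rmult_lt_0_compat.
    lra.
  lra.
have Hall : forall x y, clos_refl_trans 'I_n (fun u v => 0 < a v u) x y -> u y = u i0 -> u x = u i0.
  move=> x y; elim => [x0 y0 H1 H2|x0 //|x0 y0 z0 _ H1 _ H2 H3].
  - exact: Hcl H1 H2.
  - exact: H1 (H2 H3).
move=> l.
rewrite (Hall i i0 (Hsc i i0) erefl) (Hall l i0 (Hsc l i0) erefl) //.
Qed.

Theorem lemma5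
  (n q m : nat) (Hm : (2 <= m)%nat)
  (* f0 i = f_i^0 (real valued), g0 i = grad f_i^0 *)
  (f0 : 'I_n -> vec q -> R) (g0 : 'I_n -> vec q -> vec q)
  (* fj j i = f_i^j and domj j i = dom f_i^j, for j = 1..m *)
  (fj : nat -> 'I_n -> vec q -> R) (domj : nat -> 'I_n -> vec q -> Prop)
  (c : R) (d : 'I_n -> vec q)
  (a : 'I_n -> 'I_n -> R) (h : 'I_n -> R)
  (alpha gamma : R)
  (xs : 'I_n -> vec q) (zs : nat -> 'I_n -> vec q)
  (vs ws : 'I_n -> vec q) (ys : 'I_n -> 'I_n -> R)
  (* (A1) *)
  (HA1c : INR m - 1 < c)
  (HA1 : forall i, C2_with_gradient (f0 i) (g0 i) /\ strongly_convex c (f0 i))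
  (* (A2) *)
  (HA2 : forall j i, (1 <= j <= m)%nat ->
     proper_fun (domj j i) /\ closed_fun (fj j i) (domj j i)
     /\ convex_fun (fj j i) (domj j i))
  (* (A3) *)
  (Ha_nonneg : forall i k, 0 <= a i k)
  (HA3 : strongly_connected a)
  (* (A4) *)
  (HA4 : exists x : 'I_n -> vec q,
     (forall k, rsum (fun i => x i k) = rsum (fun i => d i k)) /\
     (forall j i, (1 <= j <= m)%nat -> domj j i (x i)))
  (* h: positive left eigenvector of L_n, normalized *)
  (Hh_pos : forall i, 0 < h i)
  (Hh_left : forall k, rsum (fun i => h i * laplacian a i k) = 0)
  (Hh_sum : rsum h = 1)
  (* parameters *)
  (Halpha : 0 < alpha)
  (Hgamma : 0 < gamma < / (INR m - 1))
  (* equilibrium: xdot = 0 *)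
  (Heq_x : forall i,
     is_prox (fj m i) (domj m i)
       (fun k => xs i k - g0 i (xs i) k + vs i k
                 + gamma * rsum_nat 1 m (fun j => zs j i k))
       (xs i))
  (* zdot^j = 0, j = 1..m-1 *)
  (Heq_z : forall j i, (1 <= j <= m - 1)%nat ->
     is_prox (fj j i) (domj j i) (fun k => xs i k - gamma * zs j i k) (xs i))
  (* vdot = 0 *)
  (Heq_v : forall i k,
     - (xs i k - d i k) / ys i i
     - alpha * rsum (fun l => laplacian a i l * vs l k) - ws i k = 0)
  (* wdot = 0 *)
  (Heq_w : forall i k, alpha * rsum (fun l => laplacian a i l * vs l k) = 0)
  (* ydot = 0 *)
  (Heq_y : forall i k, - rsum (fun l => laplacian a i l * ys l k) = 0)
  (* (1_n ⊗ I_q)^T H_nq w* = 0 *)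
  (Hw : forall k, rsum (fun i => h i * ws i k) = 0)
  (* y* = 1_n ⊗ h *)
  (Hy : forall i k, ys i k = h k) :
  (* x* solves  min sum_i f_i(x_i)  s.t.  sum_i x_i = sum_i d_i *)
  (forall k, rsum (fun i => xs i k) = rsum (fun i => d i k)) /\
  (forall j i, (1 <= j <= m)%nat -> domj j i (xs i)) /\
  (forall x : 'I_n -> vec q,
     (forall k, rsum (fun i => x i k) = rsum (fun i => d i k)) ->
     (forall j i, (1 <= j <= m)%nat -> domj j i (x i)) ->
     rsum (fun i => f0 i (xs i) + rsum_nat 1 m.+1 (fun j => fj j i (xs i)))
     <= rsum (fun i => f0 i (x i) + rsum_nat 1 m.+1 (fun j => fj j i (x i)))).
Proof.
have Hc0 : 0 <= c.
  have : INR 2 <= INR m by apply: le_INR; apply/leP.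
  simpl in *; lra.
have Hwv : forall i k, rsum (fun l => laplacian a i l * vs l k) = 0.
  move=> i k; have := Heq_w i k => /Rmult_integral [|] //; lra.
have Hcons : forall k i l, vs i k = vs l k.
  move=> k; exact: (consensus _ a (fun l => vs l k) Ha_nonneg HA3 (fun i => Hwv i k)).
have Hsum : forall k, rsum (fun i => xs i k) = rsum (fun i => d i k).
  move=> k; have := Hw k.
  have -> : rsum (fun i => h i * ws i k) = rsum (fun i => (-1) * xs i k + d i k).
    apply: rsum_ext => i; have := Heq_v i k; rewrite Heq_w Hy => Hv.
    have Hh := Hh_pos i.
    have -> : ws i k = - (xs i k - d i k) / h i by lra.
    field; lra.
  rewrite rsumD rsumZ; lra.
have Hdom : forall j i, (1 <= j <= m)%nat -> domj j i (xs i).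
  move=> j i /andP [Hj1 Hjm].
  have [->|Hne] := eqVneq j m; first exact: (proj1 (Heq_x i)).
  have Hj : (1 <= j <= m - 1)%nat.
    have Hlt : (j < m)%nat by rewrite ltn_neqAle Hne Hjm.
    by rewrite Hj1 /= subn1 -ltnS prednK // (leq_trans _ Hm).
  exact: (proj1 (Heq_z j i Hj)).
split => //; split => // x Hx Hxd.
have Key : forall i,
  f0 i (xs i) + rsum_nat 1 m.+1 (fun j => fj j i (xs i))
  + rsum (fun k => vs i k * (x i k - xs i k))
  <= f0 i (x i) + rsum_nat 1 m.+1 (fun j => fj j i (x i)).
  move=> i.
  have HA : f0 i (xs i) + rsum (fun k => g0 i (xs i) k * (x i k - xs i k)) <= f0 i (x i).
    apply: grad_ineq; first exact: (proj1 (proj1 (HA1 i))).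
    move=> y1 y2 t Ht.
    have := proj2 (HA1 i) y1 y2 t Ht.
    have : 0 <= c / 2 * t * (1 - t) * norm (vsub y1 y2) ^ 2.
      apply: Rmult_le_pos; last exact: pow2_ge_0.
      apply: Rmult_le_pos; last lra.
      apply: Rmult_le_pos; lra.
    lra.
  have Hm1 : (1 <= m)%nat by apply: leq_trans Hm.
  have HB := prox_subgrad _ _ _ _ _ (x i) (proj2 (proj2 (HA2 m i (andb_true_intro (conj Hm1 (leqnn m)))))) (Heq_x i)
     (Hxd m i (andb_true_intro (conj Hm1 (leqnn m)))).
  have HC : rsum_nat 1 m (fun j => fj j i (xs i)
       + rsum (fun k => (- gamma * zs j i k) * (x i k - xs i k)))
       <= rsum_nat 1 m (fun j => fj j i (x i)).
    apply: rsum_nat_le => j /andP [Hj1 Hjm].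
    have Hj : (1 <= j <= m - 1)%nat.
      by rewrite Hj1 /= subn1 -ltnS prednK // (leq_trans _ Hm).
    have Hj' : (1 <= j <= m)%nat by rewrite Hj1 /= ltnW.
    have := prox_subgrad _ _ _ _ _ (x i) (proj2 (proj2 (HA2 j i Hj'))) (Heq_z j i Hj) (Hxd j i Hj').
    have -> : rsum (fun k => (xs i k - gamma * zs j i k - xs i k) * (x i k - xs i k))
       = rsum (fun k => (- gamma * zs j i k) * (x i k - xs i k)).
      apply: rsum_ext => k; ring.
    done.
  rewrite rsum_natD in HC.
  rewrite !rsum_nat_last //.
  have Hid : rsum (fun k => g0 i (xs i) k * (x i k - xs i k))
    + rsum (fun k => (xs i k - g0 i (xs i) k + vs i k + gamma * rsum_nat 1 m (fun j => zs j i k) - xs i k) * (x i k - xs i k))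
    + rsum_nat 1 m (fun j => rsum (fun k => (- gamma * zs j i k) * (x i k - xs i k)))
    = rsum (fun k => vs i k * (x i k - xs i k)).
    rewrite -rsum_exch -!rsumD; apply: rsum_ext => k.
    have -> : rsum_nat 1 m (fun j => - gamma * zs j i k * (x i k - xs i k))
      = (- gamma * (x i k - xs i k)) * rsum_nat 1 m (fun j => zs j i k).
      rewrite -rsum_natZ; apply: rsum_nat_ext => j _; ring.
    ring.
  lra.
have Hz0 : rsum (fun i => rsum (fun k => vs i k * (x i k - xs i k))) = 0.
  rewrite rsum_exch2.
  have -> : rsum (fun k => rsum (fun i => vs i k * (x i k - xs i k))) = rsum (fun k : 'I_q => 0 * 0).
    apply: rsum_ext => k.
    set C := rsum (fun l => h l * vs l k).
    have Hv : forall i, vs i k = C.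
      move=> i; rewrite /C.
      have -> : rsum (fun l => h l * vs l k) = rsum (fun l => vs i k * h l).
        by apply: rsum_ext => l; rewrite (Hcons k l i); ring.
      rewrite rsumZ Hh_sum; ring.
    have -> : rsum (fun i => vs i k * (x i k - xs i k)) = rsum (fun i => C * (x i k + (-1) * xs i k)).
      by apply: rsum_ext => i; rewrite Hv; ring.
    rewrite rsumZ rsumD rsumZ Hx Hsum; ring.
  rewrite rsumZ; ring.
have := rsum_le _ _ _ Key.
rewrite rsumD Hz0; lra.
Qed.
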